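(* Let $(S,\mu^{(5)})$ be a commutative $5$-ary semigroup. Define on $S\times S$ the ternary operation $\boldsymbol\mu'^{(3)}\big[(a_1,b_1),(a_2,b_2),(a_3,b_3)\big]=\big(\mu^{(5)}[a_1,b_2,a_3,b_1,a_2],\ b_3\big)$. Then $\boldsymbol\mu'^{(3)}$ is totally associative, so $(S\times S,\boldsymbol\mu'^{(3)})$ is a ternary semigroup. If $e\in S$ satisfies $\mu^{(5)}[e,e,e,e,a]=a$ for all $a\in S$, then $E=(e,e)$ satisfies $\boldsymbol\mu'^{(3)}[E,E,\mathbf S]=\mathbf S$ for all $\mathbf S\in S\times S$.
   Context: A $5$-ary semigroup is a set $S$ with a totally associative map $\mu^{(5)}:S^{\times5}\to S$ (composition of two multiplications on an ordered $9$-tuple is independent of the position of the inner one); commutative means invariant under all permutations of the five arguments. A ternary operation is totally associative if $\mu[\mu[g_1,g_2,g_3],g_4,g_5]=\mu[g_1,\mu[g_2,g_3,g_4],g_5]=\mu[g_1,g_2,\mu[g_3,g_4,g_5]]$. *)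

(* Defs.v *)
From mathcomp Require Import all_boot all_fingroup.
Set Implicit Arguments. Unset Strict Implicit. Unset Printing Implicit Defensive.

Definition op5 (S : Type) := S -> S -> S -> S -> S -> S.
Definition op3 (S : Type) := S -> S -> S -> S.

Definition tassoc5 (S : Type) (m : op5 S) : Prop :=
  forall x1 x2 x3 x4 x5 x6 x7 x8 x9 : S,
    let p0 := m (m x1 x2 x3 x4 x5) x6 x7 x8 x9 in
    m x1 (m x2 x3 x4 x5 x6) x7 x8 x9 = p0 /\
    m x1 x2 (m x3 x4 x5 x6 x7) x8 x9 = p0 /\
    m x1 x2 x3 (m x4 x5 x6 x7 x8) x9 = p0 /\
    m x1 x2 x3 x4 (m x5 x6 x7 x8 x9) = p0.

Definition app5 (S : Type) (m : op5 S) (x : 'I_5 -> S) : S :=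
  m (x (inord 0)) (x (inord 1)) (x (inord 2)) (x (inord 3)) (x (inord 4)).

Definition comm5 (S : Type) (m : op5 S) : Prop :=
  forall (s : 'S_5) (x : 'I_5 -> S), app5 m (x \o s) = app5 m x.

Definition tassoc3 (S : Type) (m : op3 S) : Prop :=
  forall g1 g2 g3 g4 g5 : S,
    m (m g1 g2 g3) g4 g5 = m g1 (m g2 g3 g4) g5 /\
    m g1 (m g2 g3 g4) g5 = m g1 g2 (m g3 g4 g5).

Definition mu3' (S : Type) (m : op5 S) : op3 (S * S) :=
  fun X1 X2 X3 =>
    (m X1.1 X2.2 X3.1 X1.2 X2.1, X3.2).

(* Main.v *)
Require Import Defs.
From mathcomp Require Import all_boot all_fingroup.

Lemma tgen (S : Type) (m : op5 S) (C : comm5 m) (i j : nat) (x1 x2 x3 x4 x5 : S) :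
  i < 5 -> j < 5 -> 
  let l := [:: x1; x2; x3; x4; x5] in
  let f k := nth x1 l (if k == i then j else if k == j then i else k) in
  m x1 x2 x3 x4 x5 = m (f 0) (f 1) (f 2) (f 3) (f 4).
Proof.
move=> Hi Hj l f.
have := C (tperm (inord i) (inord j)) (fun k => nth x1 l k).
rewrite /app5 /= !permE /= /f.
have E : forall k, k < 5 -> ((inord k : 'I_5) == inord i) = (k == i) /\ ((inord k : 'I_5) == inord j) = (k == j).
  by move=> k Hk; rewrite -!(inj_eq val_inj) /= !inordK.
rewrite !(proj1 (E _ _)) // !(proj2 (E _ _)) //.
rewrite !inordK //.
rewrite !(fun_if (@nat_of_ord 5)) !inordK // => <-.
Qed.

Section P.
Variables (S : Type) (m : op5 S) (C : comm5 m) (A : tassoc5 m).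
Let T i j x1 x2 x3 x4 x5 Hi Hj := @tgen S m C i j x1 x2 x3 x4 x5 Hi Hj.
Lemma t01 a b c d e : m a b c d e = m b a c d e. Proof. exact: (T 0 1 a b c d e). Qed.
Lemma t02 a b c d e : m a b c d e = m c b a d e. Proof. exact: (T 0 2 a b c d e). Qed.
Lemma t03 a b c d e : m a b c d e = m d b c a e. Proof. exact: (T 0 3 a b c d e). Qed.
Lemma t04 a b c d e : m a b c d e = m e b c d a. Proof. exact: (T 0 4 a b c d e). Qed.
Lemma t12 a b c d e : m a b c d e = m a c b d e. Proof. exact: (T 1 2 a b c d e). Qed.
Lemma t13 a b c d e : m a b c d e = m a d c b e. Proof. exact: (T 1 3 a b c d e). Qed.
Lemma t14 a b c d e : m a b c d e = m a e c d b. Proof. exact: (T 1 4 a b c d e). Qed.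
Lemma t23 a b c d e : m a b c d e = m a b d c e. Proof. exact: (T 2 3 a b c d e). Qed.
Lemma t24 a b c d e : m a b c d e = m a b e d c. Proof. exact: (T 2 4 a b c d e). Qed.
Lemma t34 a b c d e : m a b c d e = m a b c e d. Proof. exact: (T 3 4 a b c d e). Qed.

Ltac p5 := repeat match goal with
| |- m ?a ?b ?c ?d ?e = m ?a ?b ?c ?d ?e => reflexivity
| |- m ?a ?b ?c ?d ?e = m ?a ?b ?c ?e _ => rewrite (t34 a b c d e)
| |- m ?a ?b ?c ?d ?e = m ?a ?b ?d _ _ => rewrite (t23 a b c d e)
| |- m ?a ?b ?c ?d ?e = m ?a ?b ?e _ _ => rewrite (t24 a b c d e)
| |- m ?a ?b ?c ?d ?e = m ?a ?c _ _ _ => rewrite (t12 a b c d e)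
| |- m ?a ?b ?c ?d ?e = m ?a ?d _ _ _ => rewrite (t13 a b c d e)
| |- m ?a ?b ?c ?d ?e = m ?a ?e _ _ _ => rewrite (t14 a b c d e)
| |- m ?a ?b ?c ?d ?e = m ?b _ _ _ _ => rewrite (t01 a b c d e)
| |- m ?a ?b ?c ?d ?e = m ?c _ _ _ _ => rewrite (t02 a b c d e)
| |- m ?a ?b ?c ?d ?e = m ?d _ _ _ _ => rewrite (t03 a b c d e)
| |- m ?a ?b ?c ?d ?e = m ?e _ _ _ _ => rewrite (t04 a b c d e)
end.

Ltac P := match goal with
 |- m (m ?a ?b ?c ?d ?e) ?f ?g ?h ?i = m (m ?a' ?b' ?c' ?d' ?e') ?f' ?g' ?h' ?i' =>
   transitivity (m (m a' b' c' d' e') f g h i); [f_equal; p5 | p5] end.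

Lemma KX y1 y2 y3 y4 y5 z1 z2 z3 z4 :
  m (m y1 y2 y3 y4 y5) z1 z2 z3 z4 = m (m z1 y2 y3 y4 y5) y1 z2 z3 z4.
Proof.
have [H _] := A y1 y2 y3 y4 y5 z1 z2 z3 z4.
rewrite /= in H. rewrite -H t01. f_equal. p5.
Qed.

Lemma A4 x1 x2 x3 x4 x5 x6 x7 x8 x9 :
  m x1 x2 x3 x4 (m x5 x6 x7 x8 x9) = m (m x1 x2 x3 x4 x5) x6 x7 x8 x9.
Proof. by have [_ [_ [_ H]]] := A x1 x2 x3 x4 x5 x6 x7 x8 x9. Qed.
Lemma A2 x1 x2 x3 x4 x5 x6 x7 x8 x9 :
  m x1 x2 (m x3 x4 x5 x6 x7) x8 x9 = m (m x1 x2 x3 x4 x5) x6 x7 x8 x9.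
Proof. by have [_ [H _]] := A x1 x2 x3 x4 x5 x6 x7 x8 x9. Qed.

Lemma canL a1 a2 a3 a4 a5 b1 b2 b3 b4 :
  m (m a1 b2 a3 b1 a2) b4 a5 b3 a4 = m (m a1 a2 a3 a4 a5) b1 b2 b3 b4.
Proof.
transitivity (m (m b2 a1 a3 b1 a2) a5 b4 b3 a4); first by P.
rewrite KX.
transitivity (m (m b1 a5 a1 a3 a2) a4 b2 b4 b3); first by P.
rewrite KX. by P.
Qed.

Lemma canM a1 a2 a3 a4 a5 b1 b2 b3 b4 :
  m a1 b4 a5 b1 (m a2 b3 a4 b2 a3) = m (m a1 a2 a3 a4 a5) b1 b2 b3 b4.
Proof.
rewrite A4.
transitivity (m (m b4 a1 a5 b1 a2) a3 b3 a4 b2); first by P.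
rewrite KX.
transitivity (m (m b1 a3 a1 a5 a2) a4 b4 b3 b2); first by P.
rewrite KX. by P.
Qed.

Lemma canR a1 a2 a3 a4 a5 b1 b2 b3 b4 :
  m a1 b2 (m a3 b4 a5 b3 a4) b1 a2 = m (m a1 a2 a3 a4 a5) b1 b2 b3 b4.
Proof.
rewrite A2.
transitivity (m (m b2 a1 a3 b4 a5) a2 b3 a4 b1); first by P.
rewrite KX.
transitivity (m (m b4 a2 a1 a3 a5) a4 b2 b3 b1); first by P.
rewrite KX. by P.
Qed.

Lemma idl e a : m e e a e e = m e e e e a.
Proof. p5. Qed.
End P.

Theorem mainTheorem6 (S : Type) (m : op5 S) :
  tassoc5 m -> comm5 m ->
  tassoc3 (mu3' m) /\
  (forall e : S, (forall a : S, m e e e e a = a) ->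
     forall X : S * S, mu3' m (e, e) (e, e) X = X).
Proof.
move=> A C; split.
  move=> [a1 b1] [a2 b2] [a3 b3] [a4 b4] [a5 b5]; rewrite /mu3' /=.
  by rewrite (@canL S m C A) (@canM S m C A) (@canR S m C A).
move=> e He [a b]; rewrite /mu3' /=.
by rewrite (@idl S m C) He.
Qed.
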